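(* For each integer $0\le k\le4$ and every $x\in\mathbb{R}$, \[ \big|H^{(k)}(x)-\big(i^ke^{ix}\alpha(x)+(2i)^ke^{2ix}\beta(x)\big)\big|\le\frac18 \qquad\text{and}\qquad |H^{(k)}(x)|\le 2^k+2. \]
   Context: Rudin–Shapiro polynomials: $P_0(z)=Q_0(z)=1$ and for $s\ge0$, $P_{s+1}(z)=P_s(z)+z^{2^s}Q_s(z)$, $Q_{s+1}(z)=P_s(z)-z^{2^s}Q_s(z)$. Let $t$ be an odd positive integer and $T:=2^{t+10}$. For $x\in\mathbb{R}$ define $\alpha(x):=2^{-(t+1)/2}P_t(e^{ix/T})$, $\beta(x):=2^{-(t+1)/2}Q_t(e^{ix/T})$, and $H(x):=e^{ix}\alpha(x)+e^{2ix}\beta(x)$. $H^{(k)}$ denotes the $k$-th derivative. *)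

(* Defs.v *)
From Stdlib Require Import Reals.
From Coquelicot Require Import Coquelicot.
Open Scope R_scope.

Definition expi (th : R) : C := (cos th, sin th).

(* Rudin-Shapiro pair (P_s(z), Q_s(z)):
   P_0 = Q_0 = 1, P_{s+1} = P_s + z^{2^s} Q_s, Q_{s+1} = P_s - z^{2^s} Q_s. *)
Fixpoint RS (s : nat) (z : C) : C * C :=
  match s with
  | O => (RtoC 1, RtoC 1)
  | S s' => let (p, q) := RS s' z in
            (Cplus p (Cmult (pow_n z (2 ^ s')) q),
             Cminus p (Cmult (pow_n z (2 ^ s')) q))
  end.
Definition P (s : nat) (z : C) : C := fst (RS s z).
Definition Q (s : nat) (z : C) : C := snd (RS s z).

Definition Tc (t : nat) : R := 2 ^ (t + 10).

Definition alpha (t : nat) (x : R) : C :=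
  Cmult (RtoC (Rpower 2 (- (INR t + 1) / 2))) (P t (expi (x / Tc t))).
Definition beta (t : nat) (x : R) : C :=
  Cmult (RtoC (Rpower 2 (- (INR t + 1) / 2))) (Q t (expi (x / Tc t))).

Definition H (t : nat) (x : R) : C :=
  Cplus (Cmult (expi x) (alpha t x)) (Cmult (expi (2 * x)) (beta t x)).

Definition DerC (f : R -> C) : R -> C :=
  fun x => (Derive (fun y => fst (f y)) x, Derive (fun y => snd (f y)) x).

Definition DerCn (k : nat) (f : R -> C) : R -> C := Nat.iter k DerC f.

(* Main.v *)
Require Import Defs.
From Stdlib Require Import Reals Lra Lia List FunctionalExtensionality.
From Coquelicot Require Import Coquelicot.
Open Scope R_scope.

Lemma is_derive_pairC (f1 f2 : R -> R) x d1 d2 :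
  is_derive f1 x d1 -> is_derive f2 x d2 ->
  @is_derive R_AbsRing C_R_NormedModule (fun y => (f1 y, f2 y) : C) x ((d1, d2) : C).
Proof.
  intros H1 H2.
  unfold is_derive in *.
  apply (filterdiff_comp'_2 f1 f2 (fun a b => (a, b) : C) x _ _ (fun a b => (a,b) : C) H1 H2).
  apply (filterdiff_ext_lin _ (fun t => t)).
  - apply (filterdiff_ext (fun t => t)).
    + intros [a b]; reflexivity.
    + apply filterdiff_id.
  - intros [a b]; reflexivity.
Qed.

Lemma is_derive_fstC (f : R -> C) x d :
  @is_derive R_AbsRing C_R_NormedModule f x d ->
  is_derive (fun y => fst (f y)) x (fst d).
Proof.
  intros Hd. unfold is_derive in *.
  apply (filterdiff_comp' f (fun t : prod_NormedModule R_AbsRing R_NormedModule R_NormedModule => fst t) x _ (fun t => fst t) Hd).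
  apply filterdiff_linear. apply is_linear_fst.
Qed.

Lemma is_derive_sndC (f : R -> C) x d :
  @is_derive R_AbsRing C_R_NormedModule f x d ->
  is_derive (fun y => snd (f y)) x (snd d).
Proof.
  intros Hd. unfold is_derive in *.
  apply (filterdiff_comp' f (fun t : prod_NormedModule R_AbsRing R_NormedModule R_NormedModule => snd t) x _ (fun t => snd t) Hd).
  apply filterdiff_linear. apply is_linear_snd.
Qed.

Fixpoint Lg (g : R -> C) (l : list (C*R)) (x : R) : C :=
  match l with
  | nil => RtoC 0
  | (a, w) :: l' => Cplus (Cmult (Cmult a (g w)) (expi (w * x))) (Lg g l' x)
  end.

Lemma Lg_deriv_comp g l x :
  is_derive (fun y => fst (Lg g l y)) x (fst (Lg (fun w => Cmult (g w) (Cmult Ci (RtoC w))) l x)) /\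
  is_derive (fun y => snd (Lg g l y)) x (snd (Lg (fun w => Cmult (g w) (Cmult Ci (RtoC w))) l x)).
Proof.
  induction l as [|[a w] l IH]; simpl.
  - split; auto_derive; auto.
  - destruct IH as [IH1 IH2]. simpl.
    split.
    + refine (is_derive_plus _ (fun y => fst (Lg g l y)) _ _ _ _ IH1).
      auto_derive; auto. ring.
    + refine (is_derive_plus _ (fun y => snd (Lg g l y)) _ _ _ _ IH2).
      auto_derive; auto. ring.
Qed.

Lemma Lg_ext g1 g2 l x : (forall w, g1 w = g2 w) -> Lg g1 l x = Lg g2 l x.
Proof. intros E; induction l as [|[a w] l IH]; simpl; [reflexivity|]. rewrite E, IH; reflexivity. Qed.

Lemma Lg_plus g1 g2 l x : Lg (fun w => Cplus (g1 w) (g2 w)) l x = Cplus (Lg g1 l x) (Lg g2 l x).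
Proof. induction l as [|[a w] l IH]; simpl; [ring|]. rewrite IH; ring. Qed.

Lemma Lg_scal c g l x : Lg (fun w => Cmult c (g w)) l x = Cmult c (Lg g l x).
Proof. induction l as [|[a w] l IH]; simpl; [ring|]. rewrite IH; ring. Qed.

Lemma Lg_app g l1 l2 x : Lg g (l1 ++ l2) x = Cplus (Lg g l1 x) (Lg g l2 x).
Proof. induction l1 as [|[a w] l IH]; simpl; [ring|]. rewrite IH; ring. Qed.

Lemma expi_add a b : expi (a + b) = Cmult (expi a) (expi b).
Proof. unfold expi. rewrite cos_plus, sin_plus. apply injective_projections; simpl; ring. Qed.

Lemma Cmod_expi a : Cmod (expi a) = 1.
Proof. unfold expi, Cmod. simpl. transitivity (sqrt 1); [f_equal|apply sqrt_1]. pose proof (sin2_cos2 a) as Hs. unfold Rsqr in Hs. nra. Qed.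

Definition mapG (s : C) (a d : R) (l : list (C*R)) : list (C*R) :=
  map (fun p => (Cmult s (fst p), a + snd p * d)) l.

Lemma Lg_mapG g s a d l x :
  Lg g (mapG s a d l) x = Cmult (Cmult s (expi (a * x))) (Lg (fun w => g (a + w * d)) l (d * x)).
Proof.
  induction l as [|[b w] l IH]; simpl; [ring|]. rewrite IH.
  replace ((a + w * d) * x) with (a * x + w * (d * x)) by ring.
  rewrite expi_add. ring.
Qed.

Definition gk (g : R -> C) (k : nat) (w : R) : C := Cmult (g w) (pow_n (Cmult Ci (RtoC w)) k).

Lemma DerCn_Lg g l k x : DerCn k (fun y => Lg g l y) x = Lg (gk g k) l x.
Proof.
  revert x; induction k as [|k IH]; intro x.
  - simpl. apply Lg_ext. intro w. unfold gk. simpl. change (@one C_Ring) with (RtoC 1). ring.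
  - change (DerCn (S k) (fun y => Lg g l y) x) with (DerC (DerCn k (fun y => Lg g l y)) x).
    unfold DerC.
    rewrite (Derive_ext (fun y => fst (DerCn k (fun y => Lg g l y) y)) (fun y => fst (Lg (gk g k) l y)) x) by (intro y; rewrite IH; reflexivity).
    rewrite (Derive_ext (fun y => snd (DerCn k (fun y => Lg g l y) y)) (fun y => snd (Lg (gk g k) l y)) x) by (intro y; rewrite IH; reflexivity).
    destruct (Lg_deriv_comp (gk g k) l x) as [D1 D2].
    assert (U1 : Derive (fun y : R => fst (Lg (gk g k) l y)) x = fst (Lg (fun w => Cmult (gk g k w) (Cmult Ci (RtoC w))) l x)) by (apply is_derive_unique; exact D1).
    assert (U2 : Derive (fun y : R => snd (Lg (gk g k) l y)) x = snd (Lg (fun w => Cmult (gk g k w) (Cmult Ci (RtoC w))) l x)) by (apply is_derive_unique; exact D2).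
    rewrite U1, U2.
    rewrite (Lg_ext _ (gk g (S k))).
    + destruct (Lg (gk g (S k)) l x); reflexivity.
    + intro w. unfold gk. simpl. change (@mult C_Ring) with Cmult. ring.
Qed.

Lemma Lg_is_derive g l k x :
  @is_derive R_AbsRing C_R_NormedModule (fun y => Lg (gk g k) l y) x (Lg (gk g (S k)) l x).
Proof.
  destruct (Lg_deriv_comp (gk g k) l x) as [D1 D2].
  apply (is_derive_ext (fun y => (fst (Lg (gk g k) l y), snd (Lg (gk g k) l y)) : C)).
  { intro y. destruct (Lg (gk g k) l y); reflexivity. }
  rewrite (Lg_ext _ (gk g (S k)) l x) in D1, D2.
  - replace (Lg (gk g (S k)) l x) with ((fst (Lg (gk g (S k)) l x), snd (Lg (gk g (S k)) l x)) : C)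
      by (destruct (Lg (gk g (S k)) l x); reflexivity).
    apply is_derive_pairC; assumption.
  - intro w. unfold gk. simpl. change (@mult C_Ring) with Cmult. ring.
  - intro w. unfold gk. simpl. change (@mult C_Ring) with Cmult. ring.
Qed.

Fixpoint RSL (s : nat) : list (C*R) * list (C*R) :=
  match s with
  | O => ((RtoC 1, 0) :: nil, (RtoC 1, 0) :: nil)
  | S s' => let (p, q) := RSL s' in
            (p ++ mapG (RtoC 1) (2 ^ s') 1 q, p ++ mapG (RtoC (-1)) (2 ^ s') 1 q)
  end.

Definition one_f : R -> C := fun _ => RtoC 1.

Lemma expi_0 : expi 0 = RtoC 1.
Proof. unfold expi. rewrite cos_0, sin_0. reflexivity. Qed.

Lemma expi_pow th n : pow_n (expi th) n = expi (INR n * th).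
Proof.
  induction n as [|n IH].
  - simpl. rewrite Rmult_0_l, expi_0. reflexivity.
  - simpl pow_n. change (@mult C_Ring) with Cmult. rewrite IH, S_INR.
    replace ((INR n + 1) * th) with (th + INR n * th) by ring.
    rewrite expi_add. reflexivity.
Qed.

Lemma RS_Lg s th : RS s (expi th) = (Lg one_f (fst (RSL s)) th, Lg one_f (snd (RSL s)) th).
Proof.
  induction s as [|s IH].
  - simpl. rewrite Rmult_0_l, expi_0. unfold one_f.
    apply injective_projections; simpl; ring.
  - simpl. rewrite IH. destruct (RSL s) as [p q]. simpl.
    rewrite !Lg_app, !Lg_mapG, expi_pow, pow_INR.
    try (replace (INR 2) with 2 by (simpl; ring)).
    rewrite Rmult_1_l.
    change (Lg (fun w => one_f (2 ^ s + w * 1)) q th) with (Lg one_f q th).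
    apply injective_projections; simpl; ring.
Qed.

Definition Wm (m : nat) (l : list (C*R)) (th : R) : C := Lg (fun w => RtoC (w ^ m)) l th.

Fixpoint csum (f : nat -> C) (n : nat) : C :=
  match n with O => f O | S n' => Cplus (csum f n') (f (S n')) end.

Lemma Lg_sum (f : nat -> R) n l th :
  Lg (fun w => RtoC (sum_f_R0 (fun j => f j * w ^ j) n)) l th
  = csum (fun j => Cmult (RtoC (f j)) (Wm j l th)) n.
Proof.
  induction n as [|n IH]; simpl.
  - unfold Wm. rewrite <- Lg_scal. apply Lg_ext. intro w. rewrite RtoC_mult. reflexivity.
  - rewrite <- IH. unfold Wm. rewrite <- Lg_scal, <- Lg_plus. apply Lg_ext. intro w.
    rewrite RtoC_plus, RtoC_mult. reflexivity.
Qed.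

Lemma Wm_rec m p q s N th :
  Wm m (p ++ mapG s N 1 q) th =
  Cplus (Wm m p th) (Cmult (Cmult s (expi (N * th)))
     (csum (fun j => Cmult (RtoC (Binomial.C m j * N ^ (m - j))) (Wm j q th)) m)).
Proof.
  unfold Wm at 1. rewrite Lg_app, Lg_mapG. fold (Wm m p th). f_equal. f_equal.
  rewrite Rmult_1_l, <- Lg_sum. apply Lg_ext. intro w. f_equal.
  rewrite Rmult_1_r, Rplus_comm, binomial. apply sum_eq. intros i _. ring.
Qed.

Lemma Cmod_sq x : Cmod x ^ 2 = fst x ^ 2 + snd x ^ 2.
Proof. unfold Cmod. rewrite pow2_sqrt; [reflexivity|]. nra. Qed.

Lemma parallelogram u z : Cmod (Cplus u z) ^ 2 + Cmod (Cminus u z) ^ 2 = 2 * (Cmod u ^ 2 + Cmod z ^ 2).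
Proof. rewrite !Cmod_sq. destruct u, z; simpl. ring. Qed.

Lemma csum_triangle f n : Cmod (csum f n) <= sum_f_R0 (fun j => Cmod (f j)) n.
Proof.
  induction n as [|n IH]; simpl; [lra|].
  eapply Rle_trans; [apply Cmod_triangle|]. lra.
Qed.

Lemma Cb_nonneg n k : 0 <= Binomial.C n k.
Proof.
  unfold Binomial.C. apply Rmult_le_pos; [apply pos_INR|].
  apply Rlt_le, Rinv_0_lt_compat, Rmult_lt_0_compat; apply INR_fact_lt_0.
Qed.

Lemma minkowski a b c e : 0 <= a -> 0 <= b -> 0 <= c -> 0 <= e -> b <= c + e ->
  sqrt (a^2 + b^2) <= sqrt (a^2 + c^2) + e.
Proof.
  intros Ha Hb Hc He Hbc.
  assert (Hs : c <= sqrt (a^2 + c^2)).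
  { rewrite <- (sqrt_pow2 c) at 1 by lra. apply sqrt_le_1_alt. nra. }
  rewrite <- (sqrt_pow2 (sqrt (a^2+c^2) + e)).
  2: { pose proof (sqrt_pos (a^2+c^2)). lra. }
  apply sqrt_le_1_alt.
  assert (HH : sqrt (a^2+c^2) ^ 2 = a^2 + c^2) by (apply pow2_sqrt; nra).
  nra.
Qed.

Lemma le_sqrt_sum a b : 0 <= b -> b <= sqrt (a^2 + b^2).
Proof. intro Hb. rewrite <- (sqrt_pow2 b) at 1 by lra. apply sqrt_le_1_alt. nra. Qed.

Lemma sum_binom_lt m : sum_f_R0 (fun j => Binomial.C (S m) j) m = 2 ^ (S m) - 1.
Proof.
  pose proof (binomial 1 1 (S m)) as Hb. replace (1+1) with 2 in Hb by ring.
  rewrite Hb, tech5, C_n_n.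
  rewrite !pow1.
  assert (sum_f_R0 (fun i => Binomial.C (S m) i * 1 ^ i * 1 ^ (S m - i)) m = sum_f_R0 (fun j => Binomial.C (S m) j) m).
  { apply sum_eq. intros i _. rewrite !pow1. ring. }
  lra.
Qed.

Lemma csum_S f n : csum f (S n) = Cplus (csum f n) (f (S n)).
Proof. reflexivity. Qed.

Lemma V_bound m q th K N : 0 <= K -> 0 <= N -> (forall j, Cmod (Wm j q th) <= K * N ^ j) ->
  Cmod (Cminus (csum (fun j => Cmult (RtoC (Binomial.C m j * N ^ (m - j))) (Wm j q th)) m) (Wm m q th))
  <= K * N ^ m * (2 ^ m - 1).
Proof.
  intros HK HN HW. destruct m as [|m].
  - simpl csum. rewrite C_n_0. simpl pow. rewrite Rmult_1_l.
    replace (Cminus (Cmult (RtoC 1) (Wm 0 q th)) (Wm 0 q th)) with (RtoC 0) by ring.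
    rewrite Cmod_0. right; ring.
  - rewrite csum_S. cbv beta. rewrite C_n_n, Nat.sub_diag, pow_O, Rmult_1_l.
    replace (Cminus (Cplus (csum (fun j => Cmult (RtoC (Binomial.C (S m) j * N ^ (S m - j))) (Wm j q th)) m)
                     (Cmult (RtoC 1) (Wm (S m) q th))) (Wm (S m) q th))
      with (csum (fun j => Cmult (RtoC (Binomial.C (S m) j * N ^ (S m - j))) (Wm j q th)) m) by ring.
    eapply Rle_trans; [apply csum_triangle|].
    apply Rle_trans with (sum_f_R0 (fun j => Binomial.C (S m) j * (K * N ^ (S m))) m).
    + apply sum_Rle. intros j Hj. rewrite Cmod_mult, Cmod_R.
      assert (Hn : 0 <= Binomial.C (S m) j * N ^ (S m - j))
        by (apply Rmult_le_pos; [apply Cb_nonneg| apply pow_le; auto]).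
      rewrite Rabs_pos_eq by exact Hn.
      replace (N ^ (S m)) with (N ^ (S m - j) * N ^ j) by (rewrite <- pow_add; f_equal; lia).
      apply Rle_trans with (Binomial.C (S m) j * N ^ (S m - j) * (K * N ^ j)).
      * apply Rmult_le_compat_l; auto.
      * right; ring.
    + rewrite <- scal_sum. rewrite sum_binom_lt. right; ring.
Qed.

Lemma W_bound s : forall m th,
  sqrt (Cmod (Wm m (fst (RSL s)) th) ^ 2 + Cmod (Wm m (snd (RSL s)) th) ^ 2)
  <= sqrt (2 ^ S s) * (2 ^ s) ^ m.
Proof.
  induction s as [|s IH]; intros m th.
  - assert (Hw : Cmod (Wm m ((RtoC 1, 0) :: nil) th) <= 1).
    { unfold Wm. simpl Lg. rewrite Rmult_0_l, expi_0.
      replace (Cplus (Cmult (Cmult (RtoC 1) (RtoC (0 ^ m))) (RtoC 1)) (RtoC 0)) with (RtoC (0 ^ m)) by ring.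
      rewrite Cmod_R. destruct m; simpl.
      - rewrite Rabs_R1; lra.
      - rewrite Rmult_0_l, Rabs_R0; lra. }
    simpl fst; simpl snd. simpl (2 ^ 0). rewrite pow1, Rmult_1_r.
    pose proof (Cmod_ge_0 (Wm m ((RtoC 1, 0) :: nil) th)).
    apply sqrt_le_1_alt. simpl. nra.
  - simpl RSL. destruct (RSL s) as [p q] eqn:Ep. simpl fst in IH; simpl snd in IH.
    simpl fst; simpl snd. rewrite !Wm_rec.
    set (u := Wm m p th). set (e := expi (2 ^ s * th)).
    set (V := csum (fun j => Cmult (RtoC (Binomial.C m j * (2 ^ s) ^ (m - j))) (Wm j q th)) m).
    replace (Cplus u (Cmult (Cmult (RtoC 1) e) V)) with (Cplus u (Cmult e V))
      by (apply injective_projections; simpl; ring).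
    replace (Cplus u (Cmult (Cmult (RtoC (-1)) e) V)) with (Cminus u (Cmult e V))
      by (apply injective_projections; simpl; ring).
    rewrite parallelogram, Cmod_mult. unfold e. rewrite Cmod_expi, Rmult_1_l.
    pose proof (Cmod_ge_0 u). pose proof (Cmod_ge_0 V).
    rewrite sqrt_mult by nra.
    set (K := sqrt (2 ^ S s)). set (N := 2 ^ s).
    assert (HK : 0 <= K) by apply sqrt_pos.
    assert (HN : 0 <= N) by (apply pow_le; lra).
    assert (HWq : forall j, Cmod (Wm j q th) <= K * N ^ j).
    { intro j. eapply Rle_trans; [|apply (IH j th)].
      apply le_sqrt_sum, Cmod_ge_0. }
    pose proof (V_bound m q th K N HK HN HWq) as HV.
    change (Cmod (Cminus V (Wm m q th)) <= K * N ^ m * (2 ^ m - 1)) in HV.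
    assert (HE : 0 <= K * N ^ m * (2 ^ m - 1)).
    { apply Rmult_le_pos; [apply Rmult_le_pos; [auto|apply pow_le; auto]|].
      assert (1 <= 2 ^ m) by (apply pow_R1_Rle; lra). lra. }
    assert (HVb : Cmod V <= Cmod (Wm m q th) + K * N ^ m * (2 ^ m - 1)).
    { replace V with (Cplus (Wm m q th) (Cminus V (Wm m q th))) at 1 by ring.
      eapply Rle_trans; [apply Cmod_triangle|]. lra. }
    pose proof (minkowski (Cmod u) (Cmod V) (Cmod (Wm m q th)) _ (Cmod_ge_0 _) (Cmod_ge_0 _) (Cmod_ge_0 _) HE HVb) as HM.
    pose proof (IH m th) as IHm. fold u K N in IHm.
    assert (Hsq : sqrt (2 ^ S (S s)) = sqrt 2 * K).
    { unfold K. rewrite <- sqrt_mult by (try apply pow_le; lra). f_equal. }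
    rewrite Hsq.
    replace ((2 ^ S s) ^ m) with (2 ^ m * N ^ m) by (unfold N; rewrite <- Rpow_mult_distr; f_equal).
    pose proof (sqrt_pos 2).
    apply Rle_trans with (sqrt 2 * (K * N ^ m + K * N ^ m * (2 ^ m - 1))).
    + apply Rmult_le_compat_l; [lra|]. lra.
    + right; ring.
Qed.

Definition cc (t : nat) : R := Rpower 2 (- (INR t + 1) / 2).
Definition dd (t : nat) : R := / Tc t.
Definition lH (t : nat) : list (C*R) :=
  mapG (RtoC (cc t)) 1 (dd t) (fst (RSL t)) ++ mapG (RtoC (cc t)) 2 (dd t) (snd (RSL t)).

Lemma cc_pos t : 0 < cc t.
Proof. unfold cc, Rpower. apply exp_pos. Qed.

Lemma cc_K t : cc t * sqrt (2 ^ S t) = 1.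
Proof.
  unfold cc. rewrite <- Rpower_sqrt by (apply pow_lt; lra).
  rewrite <- (Rpower_pow (S t) 2) by lra. rewrite Rpower_mult, <- Rpower_plus.
  rewrite S_INR. replace (- (INR t + 1) / 2 + (INR t + 1) * / 2) with 0 by field.
  apply Rpower_O; lra.
Qed.

Lemma dd_2t t : dd t * 2 ^ t = / 1024.
Proof.
  unfold dd, Tc. rewrite pow_add. assert (0 < 2 ^ t) by (apply pow_lt; lra).
  simpl (2 ^ 10). field. lra.
Qed.

Lemma H_Lg t x : H t x = Lg one_f (lH t) x.
Proof.
  unfold H, alpha, beta, P, Q, lH. rewrite Lg_app, !Lg_mapG.
  rewrite RS_Lg. simpl fst; simpl snd.
  change (Lg (fun w => one_f (1 + w * dd t)) (fst (RSL t)) (dd t * x)) with (Lg one_f (fst (RSL t)) (dd t * x)).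
  change (Lg (fun w => one_f (2 + w * dd t)) (snd (RSL t)) (dd t * x)) with (Lg one_f (snd (RSL t)) (dd t * x)).
  replace (x / Tc t) with (dd t * x) by (unfold dd, Rdiv; ring).
  rewrite Rmult_1_l. fold (cc t). ring.
Qed.

Lemma H_eq t : H t = fun y => Lg one_f (lH t) y.
Proof. apply functional_extensionality. apply H_Lg. Qed.

Lemma DerCn_H t k : DerCn k (H t) = fun y => Lg (gk one_f k) (lH t) y.
Proof. rewrite H_eq. apply functional_extensionality. intro y. apply DerCn_Lg. Qed.

Lemma pow_n_mult (z w : C) k : pow_n (Cmult z w) k = Cmult (pow_n z k) (pow_n w k).
Proof.
  induction k as [|k IH]; simpl; change (@mult C_Ring) with Cmult; change (@one C_Ring) with (RtoC 1).
  - ring.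
  - rewrite IH. ring.
Qed.

Lemma pow_n_RtoC (r : R) k : pow_n (RtoC r) k = RtoC (r ^ k).
Proof.
  induction k as [|k IH]; simpl; change (@mult C_Ring) with Cmult; change (@one C_Ring) with (RtoC 1).
  - reflexivity.
  - rewrite IH, RtoC_mult. reflexivity.
Qed.

Lemma Cmod_pow_n (z : C) k : Cmod (pow_n z k) = Cmod z ^ k.
Proof.
  induction k as [|k IH]; simpl; change (@mult C_Ring) with Cmult; change (@one C_Ring) with (RtoC 1).
  - apply Cmod_1.
  - rewrite Cmod_mult, IH. reflexivity.
Qed.

Definition FF (k : nat) (d a : R) (l : list (C*R)) (th : R) : C :=
  csum (fun j => Cmult (RtoC (Binomial.C k j * d ^ j * a ^ (k - j))) (Wm j l th)) k.

Lemma gk_expand k d a l th :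
  Lg (fun w => gk one_f k (a + w * d)) l th = Cmult (pow_n Ci k) (FF k d a l th).
Proof.
  unfold FF. rewrite <- Lg_sum, <- Lg_scal. apply Lg_ext. intro w.
  unfold gk, one_f. rewrite pow_n_mult, pow_n_RtoC.
  replace (a + w * d) with (w * d + a) by ring. rewrite binomial.
  replace (sum_f_R0 (fun i => Binomial.C k i * (w * d) ^ i * a ^ (k - i)) k)
    with (sum_f_R0 (fun j => Binomial.C k j * d ^ j * a ^ (k - j) * w ^ j) k).
  - ring.
  - apply sum_eq. intros i _. rewrite Rpow_mult_distr. ring.
Qed.

Lemma DH_decomp t k x :
  DerCn k (H t) x =
  Cplus (Cmult (Cmult (RtoC (cc t)) (expi x)) (Cmult (pow_n Ci k) (FF k (dd t) 1 (fst (RSL t)) (dd t * x))))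
        (Cmult (Cmult (RtoC (cc t)) (expi (2 * x))) (Cmult (pow_n Ci k) (FF k (dd t) 2 (snd (RSL t)) (dd t * x)))).
Proof.
  rewrite DerCn_H. unfold lH. rewrite Lg_app, !Lg_mapG, !gk_expand, Rmult_1_l. reflexivity.
Qed.

Definition zz (j : nat) : R := match j with O => 0 | S _ => 1 end.

Lemma zz_nonneg j : 0 <= zz j.
Proof. destruct j; simpl; lra. Qed.

Lemma csum_minus0 f n : Cmod (Cminus (csum f n) (f O)) <= sum_f_R0 (fun j => zz j * Cmod (f j)) n.
Proof.
  induction n as [|n IH].
  - simpl. replace (Cminus (f O) (f O)) with (RtoC 0) by ring. rewrite Cmod_0. lra.
  - rewrite csum_S. simpl sum_f_R0.
    replace (Cminus (Cplus (csum f n) (f (S n))) (f O)) with (Cplus (Cminus (csum f n) (f O)) (f (S n))) by ring.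
    eapply Rle_trans; [apply Cmod_triangle|]. simpl zz. lra.
Qed.

Lemma sum_zz g n : sum_f_R0 (fun j => zz j * g j) n = sum_f_R0 g n - g O.
Proof. induction n as [|n IH]; simpl; [ring|]. rewrite IH. ring. Qed.

Lemma FF_err k d a l th K N : 0 <= d -> 0 <= a -> 0 <= K -> 0 <= N ->
  (forall j, Cmod (Wm j l th) <= K * N ^ j) ->
  Cmod (Cminus (FF k d a l th) (Cmult (RtoC (a ^ k)) (Wm 0 l th))) <= K * ((d * N + a) ^ k - a ^ k).
Proof.
  intros Hd Ha HK HN HW.
  assert (E0 : RtoC (a ^ k) = RtoC (Binomial.C k 0 * d ^ 0 * a ^ (k - 0)))
    by (rewrite C_n_0, Nat.sub_0_r; f_equal; simpl; ring).
  rewrite E0. unfold FF.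
  eapply Rle_trans.
  { apply (csum_minus0 (fun j => Cmult (RtoC (Binomial.C k j * d ^ j * a ^ (k - j))) (Wm j l th)) k). }
  apply Rle_trans with (sum_f_R0 (fun j => zz j * (Binomial.C k j * (d * N) ^ j * a ^ (k - j) * K)) k).
  - apply sum_Rle. intros j _. apply Rmult_le_compat_l; [apply zz_nonneg|].
    rewrite Cmod_mult, Cmod_R.
    assert (Hn : 0 <= Binomial.C k j * d ^ j * a ^ (k - j))
      by (apply Rmult_le_pos; [apply Rmult_le_pos; [apply Cb_nonneg|apply pow_le; auto]|apply pow_le; auto]).
    rewrite Rabs_pos_eq by exact Hn.
    apply Rle_trans with (Binomial.C k j * d ^ j * a ^ (k - j) * (K * N ^ j)).
    + apply Rmult_le_compat_l; auto.
    + rewrite Rpow_mult_distr. right; ring.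
  - rewrite sum_zz, <- scal_sum.
    replace (sum_f_R0 (fun j => Binomial.C k j * (d * N) ^ j * a ^ (k - j)) k) with ((d * N + a) ^ k)
      by (rewrite binomial; reflexivity).
    rewrite C_n_0, Nat.sub_0_r. simpl pow. right; ring.
Qed.

Lemma alpha_W t x : alpha t x = Cmult (RtoC (cc t)) (Wm 0 (fst (RSL t)) (dd t * x)).
Proof.
  unfold alpha, P. rewrite RS_Lg. simpl fst.
  replace (x / Tc t) with (dd t * x) by (unfold dd, Rdiv; ring). reflexivity.
Qed.

Lemma beta_W t x : beta t x = Cmult (RtoC (cc t)) (Wm 0 (snd (RSL t)) (dd t * x)).
Proof.
  unfold beta, Q. rewrite RS_Lg. simpl snd.
  replace (x / Tc t) with (dd t * x) by (unfold dd, Rdiv; ring). reflexivity.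
Qed.

Lemma Cmod_Ci : Cmod Ci = 1.
Proof. unfold Cmod, Ci. simpl. replace (0 * (0 * 1) + 1 * (1 * 1)) with 1 by ring. apply sqrt_1. Qed.

Lemma split_bound (k : nat) (D M : C) : Cmod (Cminus D M) <= 1 / 8 -> Cmod M <= 2 ^ k + 15 / 8 ->
  Cmod (Cminus D M) <= 1 / 8 /\ Cmod D <= 2 ^ k + 2.
Proof.
  intros H1 H2. split; [exact H1|].
  replace D with (Cplus (Cminus D M) M) by ring.
  eapply Rle_trans; [apply Cmod_triangle|]. lra.
Qed.

Theorem lemma3p7 (t : nat) (ht : Nat.odd t = true) :
  (forall (k : nat) (x : R), (k < 4)%nat ->
     @is_derive R_AbsRing C_R_NormedModule (DerCn k (H t)) x (DerCn (S k) (H t) x)) /\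
  (forall (k : nat) (x : R), (k <= 4)%nat ->
     Cmod (Cminus (DerCn k (H t) x)
             (Cplus (Cmult (pow_n Ci k) (Cmult (expi x) (alpha t x)))
                    (Cmult (pow_n (Cmult (RtoC 2) Ci) k)
                           (Cmult (expi (2 * x)) (beta t x))))) <= 1 / 8
     /\ Cmod (DerCn k (H t) x) <= 2 ^ k + 2).
Proof.
  split.
  - intros k x _. rewrite !DerCn_H. apply Lg_is_derive.
  - intros k x Hk.
    set (th := dd t * x). set (K := sqrt (2 ^ S t)). set (N := 2 ^ t).
    assert (HK : 0 <= K) by apply sqrt_pos.
    assert (HN : 0 <= N) by (apply pow_le; lra).
    assert (Hd : 0 <= dd t) by (unfold dd, Tc; apply Rlt_le, Rinv_0_lt_compat, pow_lt; lra).
    assert (HWp : forall j, Cmod (Wm j (fst (RSL t)) th) <= K * N ^ j).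
    { intro j. eapply Rle_trans; [|apply (W_bound t j th)].
      rewrite Rplus_comm. apply le_sqrt_sum, Cmod_ge_0. }
    assert (HWq : forall j, Cmod (Wm j (snd (RSL t)) th) <= K * N ^ j).
    { intro j. eapply Rle_trans; [|apply (W_bound t j th)].
      apply le_sqrt_sum, Cmod_ge_0. }
    pose proof (cc_K t) as HcK. fold K in HcK. pose proof (cc_pos t) as Hc.
    pose proof (dd_2t t) as HdN. fold N in HdN.
    assert (HCc : Cmod (RtoC (cc t)) = cc t) by (rewrite Cmod_R; apply Rabs_pos_eq; lra).
    assert (HCi : Cmod (pow_n Ci k) = 1) by (rewrite Cmod_pow_n, Cmod_Ci; apply pow1).
    apply split_bound.
    + rewrite DH_decomp, alpha_W, beta_W. fold th.
      rewrite pow_n_mult, pow_n_RtoC.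
      set (A := Cminus (FF k (dd t) 1 (fst (RSL t)) th) (Cmult (RtoC (1 ^ k)) (Wm 0 (fst (RSL t)) th))).
      set (B := Cminus (FF k (dd t) 2 (snd (RSL t)) th) (Cmult (RtoC (2 ^ k)) (Wm 0 (snd (RSL t)) th))).
      assert (HA : Cmod A <= K * ((dd t * N + 1) ^ k - 1 ^ k)) by (apply FF_err; auto; lra).
      assert (HB : Cmod B <= K * ((dd t * N + 2) ^ k - 2 ^ k)) by (apply FF_err; auto; lra).
      match goal with |- Cmod ?E <= _ =>
        replace E with (Cplus (Cmult (Cmult (RtoC (cc t)) (expi x)) (Cmult (pow_n Ci k) A))
                              (Cmult (Cmult (RtoC (cc t)) (expi (2 * x))) (Cmult (pow_n Ci k) B)))
      end.
      2: { unfold A, B. rewrite pow1. ring. }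
      eapply Rle_trans; [apply Cmod_triangle|].
      rewrite !Cmod_mult, HCc, !Cmod_expi, HCi.
      rewrite HdN in HA, HB.
      assert (Hfin : cc t * (K * ((/ 1024 + 1) ^ k - 1 ^ k)) + cc t * (K * ((/ 1024 + 2) ^ k - 2 ^ k)) <= 1 / 8).
      { replace (cc t * (K * ((/ 1024 + 1) ^ k - 1 ^ k)) + cc t * (K * ((/ 1024 + 2) ^ k - 2 ^ k)))
          with ((cc t * K) * (((/ 1024 + 1) ^ k - 1 ^ k) + ((/ 1024 + 2) ^ k - 2 ^ k))) by ring.
        rewrite HcK, Rmult_1_l.
        destruct k as [|[|[|[|[|k]]]]]; try lia; simpl; lra. }
      pose proof (Cmod_ge_0 A). pose proof (Cmod_ge_0 B).
      assert (cc t * 1 * (1 * Cmod A) <= cc t * (K * ((/ 1024 + 1) ^ k - 1 ^ k)))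
        by (rewrite Rmult_1_r, Rmult_1_l; apply Rmult_le_compat_l; lra).
      assert (cc t * 1 * (1 * Cmod B) <= cc t * (K * ((/ 1024 + 2) ^ k - 2 ^ k)))
        by (rewrite Rmult_1_r, Rmult_1_l; apply Rmult_le_compat_l; lra).
      lra.
    + eapply Rle_trans; [apply Cmod_triangle|].
      rewrite !Cmod_mult, HCi, !Cmod_expi, alpha_W, beta_W, !Cmod_mult, HCc.
      rewrite Cmod_pow_n, Cmod_mult, Cmod_R, Cmod_Ci, Rabs_pos_eq by lra.
      fold th.
      assert (Ha : cc t * Cmod (Wm 0 (fst (RSL t)) th) <= 1).
      { rewrite <- HcK. apply Rmult_le_compat_l; [lra|]. specialize (HWp 0%nat). simpl in HWp. lra. }
      assert (Hb : cc t * Cmod (Wm 0 (snd (RSL t)) th) <= 1).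
      { rewrite <- HcK. apply Rmult_le_compat_l; [lra|]. specialize (HWq 0%nat). simpl in HWq. lra. }
      assert (H2k : 0 <= (2 * 1) ^ k) by (apply pow_le; lra).
      replace ((2 * 1) ^ k) with (2 ^ k) in * by (f_equal; ring).
      assert (2 ^ k * 1 * (cc t * Cmod (Wm 0 (snd (RSL t)) th)) <= 2 ^ k * 1 * 1)
        by (apply Rmult_le_compat_l; lra).
      lra.
Qed.
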